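(* Let $p\ge5$ and consider the white metallic tree $\mathcal W_\pi$ under the penultimate assignment. Then (a) $\pi$ possesses the preferred son property: for every node $\nu$, exactly one son of $\nu$ has metallic code ending with $0$, and the metallic code of that son is the metallic code of $\nu$ followed by $0$; and (b) a node of $\mathcal W_\pi$ is black if and only if its metallic code ends with the digit $0$.
   Context: Fix $p\ge5$. Metallic numbers: $m_{-1}=0$, $m_0=1$, $m_{n+2}=(p-2)m_{n+1}-m_n$. With $d=p-3$, $c=p-4$, the metallic code of a positive integer $n$ is the unique word $a_k\cdots a_0$ over $\{0,\dots,p-3\}$ with $a_k\ne0$, $n=\sum a_im_i$, containing no factor $d\,c^j\,d$ ($j\ge0$). White metallic tree under an assignment $\alpha$, $\mathcal W_\alpha$: nodes are the positive integers, each black or white; root $1$ is white; nodes are processed in increasing order and node $\nu$ receives $p-2$ sons if white, $p-3$ if black, namely the smallest integers not yet used, in increasing order; the assignment specifies for each node the position of its unique black son among its sons (leftmost = position $1$), the other sons being white. The penultimate assignment $\pi$ puts the black son at the penultimate position. *)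

(* Defs.v *)
From mathcomp Require Import all_boot.
Set Implicit Arguments. Unset Strict Implicit. Unset Printing Implicit Defensive.

(* metal p i = m_i, i >= 0, with m_{-1} = 0, m_0 = 1,
   m_{i+2} = (p-2) m_{i+1} - m_i.  Hence m_1 = p - 2.  For p >= 5 the
   sequence is strictly increasing, so truncated subtraction never truncates. *)
Fixpoint metal (p i : nat) : nat :=
  match i with
  | 0 => 1
  | 1 => p - 2
  | (i'.+1 as j).+1 => (p - 2) * metal p j - metal p i'
  end.

(* A word a_k ... a_0 is represented by the sequence [:: a_k; ...; a_0]
   (most significant digit first); a_0 is its last element. *)
Definition wvalue (p : nat) (w : seq nat) : nat :=
  \sum_(0 <= i < size w) nth 0 (rev w) i * metal p i.

Definition has_forbidden (p : nat) (w : seq nat) : bool :=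
  has (fun j => infix ([:: p - 3] ++ nseq j (p - 4) ++ [:: p - 3]) w)
      (iota 0 (size w)).

Definition is_mcode (p n : nat) (w : seq nat) : bool :=
  [&& all (fun a => a <= p - 3) w,
      head 0 w != 0,
      wvalue p w == n &
      ~~ has_forbidden p w].

Fixpoint words (p k : nat) : seq (seq nat) :=
  match k with
  | 0 => [:: [::]]
  | k'.+1 => flatten [seq [seq a :: w | w <- words p k'] | a <- iota 0 (p - 2)]
  end.

(* A code of n > 0 has length at most n (since m_k >= k+1), so it suffices to
   search among words of length 1..n; we return the first one found
   ([::] if none, which does not happen for n > 0). *)
Definition mcode (p n : nat) : seq nat :=
  head [::] [seq w <- flatten [seq words p k | k <- iota 1 n] | is_mcode p n w].

Definition ends_with0 (w : seq nat) : bool := last 1 w == 0.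

(* Colors: true = black, false = white.  Number of sons of a node. *)
Definition nsons (p : nat) (black : bool) : nat := if black then p - 3 else p - 2.

(* An assignment gives, for a node nu having k sons, the position (1-based,
   leftmost = 1) of its unique black son. *)
Definition assignment := nat -> nat -> nat.

Definition penultimate : assignment := fun _ k => k.-1.

(* build p a n = colors of the nodes 1, 2, ..., L created after nodes
   1, ..., n have been processed (node j is at index j-1).  Node n (processed
   at step n) receives the next nsons integers, in increasing order. *)
Fixpoint build (p : nat) (a : assignment) (n : nat) : seq bool :=
  match n with
  | 0 => [:: false]
  | n'.+1 =>
      let s := build p a n' in
      let k := nsons p (nth false s n') in
      s ++ mkseq (fun i => i.+1 == a n'.+1 k) k
  end.

Definition black (p : nat) (a : assignment) (nu : nat) : bool :=
  nth false (build p a nu) nu.-1.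

Definition sons (p : nat) (a : assignment) (nu : nat) : seq nat :=
  iota (size (build p a nu.-1)).+1 (nsons p (black p a nu)).

Example ex_metal : [seq metal 5 i | i <- iota 0 5] = [:: 1; 3; 8; 21; 55]. Proof. by []. Qed.
Example ex_tree : [seq black 5 penultimate i | i <- iota 1 12] =
  [:: false; false; true; false; false; true; false; true; false; false; true; false]. Proof. by vm_compute. Qed.

(* Main.v *)
Require Import Defs.
From mathcomp Require Import all_boot zify.
Set Implicit Arguments. Unset Strict Implicit. Unset Printing Implicit Defensive.

Lemma metalSS p i : metal p i.+2 = (p - 2) * metal p i.+1 - metal p i.
Proof. by []. Qed.
Lemma metal0 p : metal p 0 = 1. Proof. by []. Qed.
Lemma metal1 p : metal p 1 = p - 2. Proof. by []. Qed.

Lemma metal_dbl p i : 5 <= p -> 2 * metal p i <= metal p i.+1.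
Proof.
move=> p5; elim: i => [|k IH]; first by rewrite metal0 metal1; lia.
rewrite metalSS.
have : 3 * metal p k.+1 <= (p - 2) * metal p k.+1 by rewrite leq_mul2r; apply/orP; right; lia.
lia.
Qed.

Lemma metal_rec p i : 5 <= p -> metal p i.+2 + metal p i = (p - 2) * metal p i.+1.
Proof.
move=> p5; have := metal_dbl i p5; rewrite metalSS.
have : 3 * metal p i.+1 <= (p - 2) * metal p i.+1 by rewrite leq_mul2r; apply/orP; right; lia.
lia.
Qed.
Fixpoint pb (p : nat) (w : seq nat) : bool :=
  if w is a :: w' then (a == p - 3) || ((a == p - 4) && pb p w') else false.
Fixpoint bad (p : nat) (w : seq nat) : bool :=
  if w is a :: w' then ((a == p - 3) && pb p w') || bad p w' else false.

Definition pat p j : seq nat := [:: p - 3] ++ nseq j (p - 4) ++ [:: p - 3].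

Lemma pbP p w : 5 <= p ->
  reflect (exists j, prefix (nseq j (p - 4) ++ [:: p - 3]) w) (pb p w).
Proof.
move=> p5; elim: w => [|a w IH] /=.
  by apply: ReflectF => -[[|j]].
apply: (iffP idP).
  case/orP => [/eqP->|/andP[/eqP-> /IH[j hj]]]; first by (exists 0; rewrite /= eqxx prefix0s).
  by exists j.+1; rewrite /= eqxx.
case=> -[|j] /=; first by rewrite prefix0s andbT eq_sym => ->.
case/andP=> /eqP <- hj; apply/orP; right; rewrite eqxx /=; apply/IH; by exists j.
Qed.

Lemma badP p w : 5 <= p -> reflect (exists j, infix (pat p j) w) (bad p w).
Proof.
move=> p5; elim: w => [|a w IH].
  by apply: ReflectF => -[j]; rewrite infixs0 /pat.
have E : bad p (a :: w) = ((a == p - 3) && pb p w) || bad p w by [].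
rewrite E; apply: (iffP idP).
  case/orP => [/andP[/eqP-> /(pbP _ p5)[j hj]]|/IH[j hj]].
    by exists j; rewrite infix_consl /pat /= eqxx hj.
  by exists j; rewrite infix_consl hj orbT.
case=> j; rewrite infix_consl /pat /= => /orP[/andP[/eqP<- hj]|hj].
  by rewrite eqxx /=; apply/orP; left; apply/(pbP _ p5); exists j.
by apply/orP; right; apply/IH; exists j.
Qed.

Lemma badE p w : 5 <= p -> has_forbidden p w = bad p w.
Proof.
move=> p5; apply/idP/idP.
  by case/hasP => j _ hj; apply/(badP _ p5); exists j.
case/(badP _ p5) => j hj; apply/hasP; exists j => //.
rewrite mem_iota /=.
have := size_subseq (infixW hj); rewrite /pat /= size_cat size_nseq /=; lia.
Qed.

Lemma rev_pat p j : rev (pat p j) = pat p j.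
Proof.
by rewrite /pat /= rev_cons rev_cat rev_nseq /= -cats1 -cat_cons.
Qed.

Lemma bad_rev p w : 5 <= p -> bad p (rev w) = bad p w.
Proof.
move=> p5; apply/(badP _ p5)/(badP _ p5) => -[j hj]; exists j.
  by rewrite -infix_rev rev_pat.
by rewrite -infix_rev rev_pat revK.
Qed.

Lemma bad_rcons p w a : 5 <= p ->
  bad p (rcons w a) = ((a == p - 3) && pb p (rev w)) || bad p w.
Proof. by move=> p5; rewrite -bad_rev // rev_rcons /= bad_rev. Qed.

Definition good p w := all (fun a => a <= p - 3) w && ~~ bad p w.

Lemma good_cons p a w : good p (a :: w) =
  [&& a <= p - 3, ~~ ((a == p - 3) && pb p w) & good p w].
Proof.
rewrite /good /= negb_or.
by case: (a <= p - 3); case: (all _ w); case: (~~ bad p w); rewrite /= ?andbF ?andbT.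
Qed.

Lemma good_rcons p a w : 5 <= p -> good p (rcons w a) =
  [&& a <= p - 3, ~~ ((a == p - 3) && pb p (rev w)) & good p w].
Proof.
move=> p5; rewrite /good all_rcons bad_rcons // negb_or.
by case: (a <= p - 3); case: (all _ w); case: (~~ bad p w); rewrite /= ?andbF ?andbT.
Qed.

Lemma val_cons p a w : wvalue p (a :: w) = a * metal p (size w) + wvalue p w.
Proof.
rewrite /wvalue /= big_nat_recr //= addnC; congr (_ + _).
  by rewrite rev_cons nth_rcons size_rev ltnn eqxx.
apply: eq_big_nat => i /andP[_ hi].
by rewrite rev_cons nth_rcons size_rev hi.
Qed.

Lemma val_nil p : wvalue p [::] = 0.
Proof. by rewrite /wvalue big_nil. Qed.

Lemma val_rcons p w a : wvalue p (rcons w a) = wvalue p (rcons w 0) + a.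
Proof.
elim: w => [|b w IH].
  by rewrite /= !val_cons val_nil metal0; lia.
by rewrite /= !val_cons !size_rcons IH addnA.
Qed.

Definition mp p L := if L is L'.+1 then metal p L' else 0.

Lemma metal_pos p i : 5 <= p -> 0 < metal p i.
Proof.
move=> p5; elim: i => [|i IH] //; have := metal_dbl i p5; lia.
Qed.

Lemma metal_lt p i : 5 <= p -> metal p i < metal p i.+1.
Proof. move=> p5; have := metal_dbl i p5; have := metal_pos i p5; lia. Qed.

Lemma metal_mono p i j : 5 <= p -> i <= j -> metal p i <= metal p j.
Proof.
move=> p5; elim: j => [|j IH]; first by rewrite leqn0 => /eqP->.
rewrite leq_eqVlt => /orP[/eqP->//|hij].
by apply: leq_trans (IH hij) (ltnW (metal_lt _ p5)).
Qed.

Lemma metal_smono p i j : 5 <= p -> i < j -> metal p i < metal p j.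
Proof.
move=> p5 hij; apply: leq_trans (metal_lt _ p5) (metal_mono p5 hij).
Qed.

Lemma metal_ge p i : 5 <= p -> i < metal p i.
Proof.
move=> p5; elim: i => [|i IH] //; have := metal_lt i p5; lia.
Qed.

Lemma metal_mp p L : 5 <= p -> metal p L.+1 + mp p L = (p - 2) * metal p L.
Proof.
move=> p5; case: L => [|L] /=; first by rewrite muln1 addn0.
exact: metal_rec.
Qed.

Lemma mp_le p L : 5 <= p -> mp p L <= metal p L.
Proof. by move=> p5; case: L => [|L] //=; apply: ltnW; apply: metal_lt. Qed.

Lemma mulS_sub p k m : k < p -> (p - k) * m = (p - k.+1) * m + m.
Proof. by move=> hk; rewrite addnC -mulSn; congr (_ * _); lia. Qed.

Lemma bound p w : 5 <= p -> good p w ->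
  wvalue p w < metal p (size w) /\
  (~~ pb p w -> wvalue p w + mp p (size w) < metal p (size w)).
Proof.
move=> p5; elim: w => [|a w IH].
  by rewrite val_nil /=.
rewrite good_cons => /and3P[ha hpb /IH[IH1 IH2]].
rewrite val_cons.
change (size (a :: w)) with (size w).+1.
change (mp p (size w).+1) with (metal p (size w)).
have Epb : pb p (a :: w) = (a == p - 3) || ((a == p - 4) && pb p w) by [].
rewrite Epb.
set m := metal p (size w).
have F := metal_mp (size w) p5; rewrite -/m in F.
have Fm := mp_le (size w) p5; rewrite -/m in Fm.
have h2 := mulS_sub m (_ : 2 < p); have h3 := mulS_sub m (_ : 3 < p);
have h4 := mulS_sub m (_ : 4 < p).
have {h2 h3 h4} [h2 h3 h4] : [/\ (p-2)*m = (p-3)*m + m, (p-3)*m = (p-4)*m + m & (p-4)*m = (p-5)*m + m].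
  by split; [apply: h2|apply: h3|apply: h4]; lia.
have [ea|na] := eqVneq a (p - 3).
  move: hpb; rewrite ea eqxx andTb => /IH2 {}IH2; split => //; lia.
have [eb|nb] := eqVneq a (p - 4).
  rewrite eb; split; first by lia.
  rewrite orFb andTb => /IH2; lia.
have h5 : a * m <= (p - 5) * m by rewrite leq_mul2r; apply/orP; right; lia.
rewrite orFb andFb.
split; first by lia.
move=> _; lia.
Qed.

Lemma good_consK p a w : good p (a :: w) -> good p w.
Proof. by rewrite good_cons => /and3P[]. Qed.

Lemma good_rconsK p a w : 5 <= p -> good p (rcons w a) -> good p w.
Proof. by move=> p5; rewrite good_rcons // => /and3P[]. Qed.

Lemma lex_head p a b s t : 5 <= p -> good p (a :: s) -> good p (b :: t) ->
  size s = size t -> a < b -> wvalue p (a :: s) < wvalue p (b :: t).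
Proof.
move=> p5 gs gt hst hab; rewrite !val_cons -hst.
have [B _] := bound p5 (good_consK gs).
have : a.+1 * metal p (size s) <= b * metal p (size s) by rewrite leq_mul2r hab orbT.
rewrite mulSn; lia.
Qed.

Lemma val_inj p s t : 5 <= p -> good p s -> good p t -> size s = size t ->
  wvalue p s = wvalue p t -> s = t.
Proof.
move=> p5; elim: s t => [|a s IH] [|b t] //= gs gt [hst] hv.
have [hab|hba|eab] := ltngtP a b.
- by have := lex_head p5 gs gt hst hab; rewrite hv ltnn.
- by have := lex_head p5 gt gs (esym hst) hba; rewrite hv ltnn.
move: hv; rewrite eab !val_cons hst => /addnI hv.
by rewrite (IH t (good_consK gs) (good_consK gt) hst hv).
Qed.

Lemma mono p x y a b : 5 <= p -> size x = size y ->
  good p (rcons x a) -> good p (rcons y b) ->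
  wvalue p x < wvalue p y -> wvalue p (rcons x a) < wvalue p (rcons y b).
Proof.
move=> p5; elim: x y => [|a' x IH] [|b' y] //=; first by rewrite ltnn.
move=> [hs] gx gy hv.
have gx' := @good_rconsK p a (a' :: x) p5 gx; have gy' := @good_rconsK p b (b' :: y) p5 gy.
have [hab|hba|eab] := ltngtP a' b'.
- by apply: lex_head => //; rewrite !size_rcons hs.
- by have := lex_head p5 gy' gx' (esym hs) hba; rewrite ltnNge ltnW.
move: hv; rewrite eab !val_cons !size_rcons hs ltn_add2l => hv.
by rewrite ltn_add2l; apply: IH => //; [exact: good_consK gx|exact: good_consK gy].
Qed.

Lemma val_lo p a w : 5 <= p -> 0 < a -> metal p (size w) <= wvalue p (a :: w).
Proof.
move=> p5 ha; rewrite val_cons.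
have : 1 * metal p (size w) <= a * metal p (size w) by rewrite leq_mul2r ha orbT.
lia.
Qed.

Lemma exist_word p L n : 5 <= p -> n < metal p L ->
  exists w, [/\ size w = L, good p w, wvalue p w = n &
                (n + mp p L < metal p L -> ~~ pb p w)].
Proof.
move=> p5; elim: L n => [|L IH] n hn.
  by exists [::]; rewrite val_nil; move: hn; rewrite metal0; case: n.
set m := metal p L.
have mpos : 0 < m := metal_pos L p5.
have F := metal_mp L p5; rewrite -/m in F.
have Fm := mp_le L p5; rewrite -/m in Fm.
have hr : n %% m < m by rewrite ltn_mod.
have [w [sw gw vw pw]] := IH _ hr.
have hn' := divn_eq n m.
set a := n %/ m in hn'.
have h2 : (p-2)*m = (p-3)*m + m by rewrite addnC -mulSn; congr (_ * _); lia.
have h3 : (p-3)*m = (p-4)*m + m by rewrite addnC -mulSn; congr (_ * _); lia.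
have ha : a <= p - 3.
  rewrite leqNgt; apply/negP => ha.
  have : (p - 2) * m <= a * m by rewrite leq_mul2r; apply/orP; right; lia.
  lia.
exists (a :: w); split => //.
- by rewrite /= sw.
- rewrite good_cons ha gw /= andbT; apply/negP => /andP[/eqP ea hp].
  move: hp; apply/negP; apply: pw; rewrite ea in hn'; lia.
- by rewrite val_cons sw -/m vw -hn'.
move=> hlt.
change (mp p L.+1) with m in hlt.
have ha' : a <= p - 4.
  rewrite leqNgt; apply/negP => ha'.
  have : (p - 3) * m <= a * m by rewrite leq_mul2r; apply/orP; right; lia.
  lia.
rewrite /= negb_or (_ : (a == p - 3) = false) /=; last by apply/eqP; lia.
apply/negP => /andP[/eqP ea hp]; move: hp; apply/negP; apply: pw.
rewrite ea in hn'; lia.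
Qed.

Lemma strip p w n : 5 <= p -> good p w -> wvalue p w = n -> 0 < n ->
  exists w', [/\ good p w', head 0 w' != 0, wvalue p w' = n & size w' <= size w].
Proof.
move=> p5; elim: w => [|a w IH] gw hv hn; first by move: hv hn; rewrite val_nil => <-.
have [ea|na] := eqVneq a 0.
  move: hv; rewrite val_cons ea mul0n add0n => hv.
  have [w' [g1 g2 g3 g4]] := IH (good_consK gw) hv hn.
  by exists w'; split => //; apply: leq_trans g4 _.
by exists (a :: w); split.
Qed.

Lemma is_mcodeE p n w : 5 <= p ->
  is_mcode p n w = [&& good p w, head 0 w != 0 & wvalue p w == n].
Proof.
move=> p5; rewrite /is_mcode /good badE //.
by case: (all _ w); case: (head 0 w != 0); case: (wvalue p w == n); case: (bad p w).
Qed.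

Lemma code_bounds p n w : 5 <= p -> is_mcode p n w ->
  [/\ 0 < size w, n < metal p (size w) & metal p (size w).-1 <= n].
Proof.
move=> p5; rewrite is_mcodeE // => /and3P[g h /eqP v].
case: w g h v => [|a w] //= g h v; split => //.
  by rewrite -v; case: (bound p5 g).
by rewrite -v; apply: val_lo; rewrite // lt0n.
Qed.

Lemma code_uniq p n w1 w2 : 5 <= p -> is_mcode p n w1 -> is_mcode p n w2 -> w1 = w2.
Proof.
move=> p5 h1 h2.
have [s1 u1 l1] := code_bounds p5 h1; have [s2 u2 l2] := code_bounds p5 h2.
have es : size w1 = size w2.
  apply/eqP; rewrite eqn_leq; apply/andP; split; rewrite leqNgt; apply/negP => hlt.
    have : metal p (size w2) <= metal p (size w1).-1 by apply: metal_mono => //; lia.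
    lia.
  have : metal p (size w1) <= metal p (size w2).-1 by apply: metal_mono => //; lia.
  lia.
move: h1 h2; rewrite !is_mcodeE // => /and3P[g1 _ /eqP v1] /and3P[g2 _ /eqP v2].
by apply: (val_inj p5) => //; rewrite v1 v2.
Qed.

Lemma words_mem p w : all (fun a => a < p - 2) w -> w \in words p (size w).
Proof.
elim: w => [|a w IH] //= /andP[ha hw].
apply/flatten_mapP; exists a; first by rewrite mem_iota.
by apply/mapP; exists w; rewrite ?IH.
Qed.

Lemma mcode_eq p n w : 5 <= p -> is_mcode p n w -> mcode p n = w.
Proof.
move=> p5 hw.
have [s1 u1 l1] := code_bounds p5 hw.
have hsz : size w <= n by have := metal_ge (size w).-1 p5; lia.
have hin : w \in [seq w <- flatten [seq words p k | k <- iota 1 n] | is_mcode p n w].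
  rewrite mem_filter hw /=; apply/flatten_mapP; exists (size w).
    by rewrite mem_iota; lia.
  apply: words_mem; move: hw; rewrite /is_mcode => /andP[ha _].
  by apply: sub_all ha => a /=; lia.
rewrite /mcode; move: hin.
have := filter_all (is_mcode p n) (flatten [seq words p k | k <- iota 1 n]).
case: [seq _ <- _ | _] => [|x s] //= /andP[hx _] _.
exact: code_uniq hx hw.
Qed.

Lemma mcode_spec p n : 5 <= p -> 0 < n -> is_mcode p n (mcode p n).
Proof.
move=> p5 hn.
have [w [sw gw vw _]] := exist_word p5 (metal_ge n p5).
have [w' [g1 g2 g3 _]] := strip p5 gw vw hn.
have hc : is_mcode p n w' by rewrite is_mcodeE // g1 g2 g3 eqxx.
by rewrite (mcode_eq p5 hc).
Qed.

Lemma mcode0 p : mcode p 0 = [::].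
Proof. by []. Qed.

Lemma mcode_good p n : 5 <= p -> good p (mcode p n).
Proof.
move=> p5; case: n => [|n]; first by rewrite mcode0.
by have := mcode_spec p5 (ltn0Sn n); rewrite is_mcodeE // => /and3P[].
Qed.

Lemma mcode_val p n : 5 <= p -> wvalue p (mcode p n) = n.
Proof.
move=> p5; case: n => [|n]; first by rewrite mcode0 val_nil.
by have := mcode_spec p5 (ltn0Sn n); rewrite is_mcodeE // => /and3P[_ _ /eqP].
Qed.

Lemma mcode_head p n : 5 <= p -> 0 < n -> head 0 (mcode p n) != 0.
Proof.
by move=> p5 hn; have := mcode_spec p5 hn; rewrite is_mcodeE // => /and3P[].
Qed.

Definition sig p n := wvalue p (rcons (mcode p n) 0).

Lemma sig0 p : sig p 0 = 0.
Proof. by rewrite /sig mcode0 /= val_cons val_nil. Qed.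

Lemma val_code_rcons p n b : 5 <= p -> wvalue p (rcons (mcode p n) b) = sig p n + b.
Proof. by move=> p5; rewrite val_rcons. Qed.

Lemma good0 p n : 5 <= p -> good p (rcons (mcode p n) 0).
Proof.
move=> p5; rewrite good_rcons // mcode_good // andbT /=.
by rewrite (_ : (0 == p - 3) = false) //; apply/eqP; lia.
Qed.

Lemma rep p n b : 5 <= p -> good p (rcons (mcode p n) b) -> (0 < n) || (0 < b) ->
  mcode p (sig p n + b) = rcons (mcode p n) b.
Proof.
move=> p5 g h; apply: mcode_eq => //.
rewrite is_mcodeE // g val_code_rcons // eqxx andbT.
case: n h g => [|n] h g; first by rewrite mcode0 /= -lt0n.
have := mcode_head p5 (ltn0Sn n).
by case: (mcode p n.+1).
Qed.

Lemma dec p n : 5 <= p -> 0 < n ->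
  exists nu b, [/\ mcode p n = rcons (mcode p nu) b, n = sig p nu + b &
                   good p (rcons (mcode p nu) b)].
Proof.
move=> p5 hn.
have hc := mcode_spec p5 hn.
have := hc; rewrite is_mcodeE // => /and3P[g h /eqP v].
case/lastP E: (mcode p n) g h v => [|u b] //= g h v.
have hu : mcode p (wvalue p u) = u.
  case: u E g h v => [|c u] E g h v; first by rewrite val_nil mcode0.
  apply: mcode_eq => //; rewrite is_mcodeE // eqxx andbT /=.
  by rewrite (good_rconsK p5 g) /=; move: h; rewrite /=.
exists (wvalue p u), b; rewrite hu; split => //.
by rewrite -val_code_rcons // hu v.
Qed.

Lemma lo_rcons p n b : 5 <= p -> 0 < n ->
  metal p (size (mcode p n)) <= wvalue p (rcons (mcode p n) b).
Proof.
move=> p5 hn; have := mcode_head p5 hn.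
case: (mcode p n) => [|c u] //= hc.
have := @val_lo p c (rcons u b) p5; rewrite size_rcons; apply; by rewrite lt0n.
Qed.

Lemma cmp p x y a b : 5 <= p -> good p (rcons (mcode p x) a) -> good p (rcons (mcode p y) b) ->
  x < y -> wvalue p (rcons (mcode p x) a) < wvalue p (rcons (mcode p y) b).
Proof.
move=> p5 gx gy hxy.
have hy : 0 < y by case: y hxy {gy}.
have [lt|gt|eq] := ltngtP (size (mcode p x)) (size (mcode p y)).
- apply: leq_trans (lo_rcons b p5 hy).
  have [B _] := bound p5 gx; rewrite size_rcons in B.
  apply: leq_trans B _; exact: metal_mono.
- have hx : 0 < x.
    by case: x hxy gx gt {gy} => //; rewrite mcode0.
  have := code_bounds p5 (mcode_spec p5 hx) => -[_ _ l1].
  have := code_bounds p5 (mcode_spec p5 hy) => -[_ u2 _].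
  have : metal p (size (mcode p y)) <= metal p (size (mcode p x)).-1.
    by apply: metal_mono => //; lia.
  lia.
apply: mono => //; by rewrite !mcode_val.
Qed.

Definition Kn p n := if good p (rcons (mcode p n) (p - 3)) then p - 2 else p - 3.

Lemma digit_lt_K p n b : 5 <= p -> good p (rcons (mcode p n) b) -> b < Kn p n.
Proof.
move=> p5 g; have := g; rewrite good_rcons // => /and3P[hb _ _].
rewrite /Kn; have [eb|nb] := eqVneq b (p - 3).
  by rewrite -eb g; lia.
by case: ifP => _; lia.
Qed.

Lemma digit_good p n b : 5 <= p -> b < Kn p n -> good p (rcons (mcode p n) b).
Proof.
move=> p5; rewrite /Kn; case: ifP => g hb.
  have [eb|nb] := eqVneq b (p - 3); first by rewrite eb.
  by rewrite good_rcons // (negbTE nb) mcode_good // andbT; lia.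
by rewrite good_rcons // (_ : (b == p - 3) = false) ?mcode_good // ?andbT; [lia | apply/eqP; lia].
Qed.

Lemma sigS p mu : 5 <= p -> sig p mu.+1 = sig p mu + Kn p mu.
Proof.
move=> p5.
set N := sig p mu + Kn p mu.
have KK : p - 3 <= Kn p mu by rewrite /Kn; case: ifP => _; lia.
have hN : 0 < N by rewrite /N; lia.
have [nu [b [E1 E2 g]]] := dec p5 hN.
have [lt|gt|eq] := ltngtP nu mu.
- have := cmp p5 g (good0 mu p5) lt.
  by rewrite val_code_rcons // val_code_rcons // -E2 addn0 /N; lia.
- pose M := sig p mu.+1.
  have hM1 : sig p mu < M.
    by have := cmp p5 (good0 mu p5) (good0 mu.+1 p5) (ltnSn mu); rewrite !val_code_rcons // !addn0.
  have [done|hM2] : M = N \/ M < N.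
    have [e|l] := eqVneq nu mu.+1.
      rewrite e in E2; case: b E2 {E1 g} => [|b] E2; first by left; rewrite E2 addn0.
      by right; rewrite E2 /M; lia.
    have l' : mu.+1 < nu by lia.
    right; have := cmp p5 (good0 mu.+1 p5) g l'.
    by rewrite !val_code_rcons // addn0 -E2.
    by [].
  pose j := M - sig p mu.
  have hj : 0 < j < Kn p mu by rewrite /j /N in hM1 hM2 *; lia.
  have gj' : good p (rcons (mcode p mu) j) by apply: digit_good => //; lia.
  have hor : (0 < mu) || (0 < j) by apply/orP; right; lia.
  have r1 := rep p5 gj' hor.
  have r2 := rep p5 (good0 mu.+1 p5) (ltn0Sn mu).
  rewrite addn0 -/M in r2.
  have eM : sig p mu + j = M by rewrite /j; lia.
  rewrite eM r2 in r1.
  have := f_equal (last 0) r1.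
  by rewrite !last_rcons => ej; move: hj; rewrite -ej.
- subst nu; have := digit_lt_K p5 g; move: E2; rewrite /N; lia.
Qed.

Lemma Kn_bounds p n : p - 3 <= Kn p n <= p - 2.
Proof. by rewrite /Kn; case: ifP => _; lia. Qed.

Lemma sig_step p n : 5 <= p -> sig p n + 2 <= sig p n.+1.
Proof. by move=> p5; rewrite sigS //; have := Kn_bounds p n; lia. Qed.

Lemma sig_mono p i j : 5 <= p -> i < j -> sig p i < sig p j.
Proof.
move=> p5; elim: j => [|j IH] //.
rewrite ltnS leq_eqVlt => /orP[/eqP->|hij]; first by have := sig_step j p5; lia.
by have := sig_step j p5; have := IH hij; lia.
Qed.

Lemma sig_ge p n : 5 <= p -> n <= sig p n.
Proof.
move=> p5; elim: n => [|n IH] //; have := sig_step n p5; lia.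
Qed.

Lemma ends0_sig p nu : 5 <= p -> 0 < nu -> mcode p (sig p nu) = rcons (mcode p nu) 0.
Proof.
move=> p5 hnu; have := rep p5 (good0 nu p5) (_ : (0 < nu) || (0 < 0)).
by rewrite addn0; apply; rewrite hnu.
Qed.

Lemma ends0_inv p m : 5 <= p -> 0 < m -> ends_with0 (mcode p m) ->
  exists2 nu, 0 < nu & m = sig p nu.
Proof.
move=> p5 hm; have [nu [b [E1 E2 g]]] := dec p5 hm.
rewrite /ends_with0 E1 last_rcons => /eqP eb; rewrite eb addn0 in E2.
exists nu => //; case: nu E2 {E1 g} => [|nu] //; rewrite sig0; lia.
Qed.

Lemma link p n : 5 <= p ->
  ends_with0 (mcode p n.+1) = ~~ good p (rcons (mcode p n) (p - 3)).
Proof.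
move=> p5.
case: (boolP (ends_with0 (mcode p n.+1))) => h.
  have [nu hnu E] := ends0_inv p5 (ltn0Sn n) h.
  case: nu hnu E => [|mu] // _; rewrite sigS // => E.
  have KK := Kn_bounds p mu.
  set e := (Kn p mu).-1.
  have ge : good p (rcons (mcode p mu) e) by apply: digit_good => //; rewrite /e; lia.
  have hor : (0 < mu) || (0 < e) by apply/orP; right; rewrite /e; lia.
  have En : n = sig p mu + e by rewrite /e; lia.
  rewrite En (rep p5 ge hor) good_rcons // eqxx /= rev_rcons /=.
  move: ge; rewrite /e /Kn; case: ifP => g.
    by rewrite (_ : (p - 2).-1 = p - 3) ?eqxx //; lia.
  rewrite (_ : (p - 3).-1 = p - 4); last by lia.
  rewrite (_ : (p - 4 == p - 3) = false); last by apply/eqP; lia.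
  rewrite eqxx /= => _; move: g; rewrite good_rcons // eqxx mcode_good // andbT /=.
  by rewrite leqnn /= => ->.
apply/esym; apply/negbF.
have [nu [b [E1 E2 g]]] := dec p5 (ltn0Sn n).
have hb : b != 0 by move: h; rewrite /ends_with0 E1 last_rcons.
case: n E1 E2 h => [|n] E1 E2 h; first by rewrite mcode0 /good /= leqnn /= orbF andbF.
have hlt := digit_lt_K p5 g.
have gb : good p (rcons (mcode p nu) b.-1) by apply: digit_good => //; lia.
have hor : (0 < nu) || (0 < b.-1).
  case: nu {E1 g gb hlt} E2 => [|nu] //; rewrite sig0 => E2; apply/orP; right; lia.
have En : n.+1 = sig p nu + b.-1 by lia.
rewrite En (rep p5 gb hor) good_rcons // eqxx gb andbT /= rev_rcons /= leqnn /= negb_or.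
have := g; rewrite good_rcons // => /and3P[hb3 hpb _].
apply/andP; split; first by apply/eqP; lia.
apply/negP => /andP[/eqP eb hp]; move: hpb.
by rewrite (_ : b = p - 3) ?eqxx ?hp //; lia.
Qed.

Lemma block p n m : 5 <= p -> sig p n + 2 <= m <= sig p n.+1 + 1 ->
  ends_with0 (mcode p m) = (m == sig p n.+1).
Proof.
move=> p5 /andP[h1 h2].
have [e|ne] := eqVneq m (sig p n.+1).
  by rewrite e ends0_sig // /ends_with0 last_rcons.
apply/negP => h.
have hm : 0 < m by lia.
have [nu hnu E] := ends0_inv p5 hm h.
have h3 : n < nu.
  rewrite ltnNge; apply/negP => hle.
  move: hle; rewrite leq_eqVlt => /orP[/eqP e|l].
    by move: h1; rewrite E e; lia.
  by have := sig_mono p5 l; lia.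
have h4 : nu < n.+2.
  rewrite ltnNge; apply/negP => hle.
  have := sig_step n.+1 p5.
  have : sig p n.+2 <= sig p nu.
    move: hle; rewrite leq_eqVlt => /orP[/eqP <-//|l].
    exact: ltnW (sig_mono p5 l).
  lia.
have : nu = n.+1 by lia.
by move=> e; move: ne; rewrite E e eqxx.
Qed.

Lemma build_inv p n : 5 <= p ->
  size (build p penultimate n) = (sig p n).+1 /\
  forall j, j < size (build p penultimate n) ->
    nth false (build p penultimate n) j = ends_with0 (mcode p j.+1).
Proof.
move=> p5; elim: n => [|n [IH1 IH2]].
  split; first by rewrite sig0.
  case=> [|j] // _.
  rewrite link // mcode0 /good /= leqnn /= orbF andbF //.
set s := build p penultimate n.
have Eb : build p penultimate n.+1 =
  s ++ mkseq (fun i => i.+1 == (nsons p (nth false s n)).-1) (nsons p (nth false s n)).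
  by [].
have hn : n < size s by rewrite IH1; have := sig_ge n p5; lia.
have EK : nsons p (nth false s n) = Kn p n.
  by rewrite IH2 // link // /nsons /Kn; case: (good _ _).
rewrite Eb EK size_cat size_mkseq IH1 sigS //; split => // j hj.
rewrite nth_cat IH1; case: ifP => hjs; first by rewrite IH2 // IH1.
have KK := Kn_bounds p n.
rewrite nth_mkseq; last by lia.
rewrite (@block p n) //; last by rewrite sigS //; lia.
rewrite sigS //; apply/eqP/eqP; lia.
Qed.

Theorem theorem5 (p : nat) : 5 <= p ->
  (forall nu, 0 < nu ->
     exists s, [/\ s \in sons p penultimate nu,
                  ends_with0 (mcode p s),
                  mcode p s = rcons (mcode p nu) 0 &
                  forall s', s' \in sons p penultimate nu ->
                             ends_with0 (mcode p s') -> s' = s])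
  /\
  (forall nu, 0 < nu -> black p penultimate nu = ends_with0 (mcode p nu)).
Proof.
move=> p5.
have hb : forall nu, 0 < nu -> black p penultimate nu = ends_with0 (mcode p nu).
  move=> nu hnu; rewrite /black.
  have [I1 I2] := build_inv nu p5.
  rewrite I2; first by rewrite prednK.
  by rewrite I1; have := sig_ge nu p5; lia.
split => // -[|n] // _.
have [I1 _] := build_inv n p5.
have Es : sons p penultimate n.+1 = iota (sig p n + 2) (Kn p n).
  rewrite /sons /= I1 hb // link // /nsons /Kn.
  by case: (good _ _); rewrite addn2.
have KK := Kn_bounds p n.
exists (sig p n.+1); split.
- by rewrite Es mem_iota sigS //; lia.
- by rewrite ends0_sig // /ends_with0 last_rcons.
- by rewrite ends0_sig.
move=> s'; rewrite Es mem_iota => hs' h0.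
apply/eqP; rewrite -(@block p n) //.
by rewrite sigS //; lia.
Qed.
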